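(* For a complex parameter $\mu$, let $S_n(z;\mu)$, $n\ge -1$, be defined by $S_{-1}=S_0=1$ and $$S_{n+1}S_{n-1}=-z\left[S_n\frac{\partial^2S_n}{\partial z^2}-\left(\frac{\partial S_n}{\partial z}\right)^2\right]-S_n\frac{\partial S_n}{\partial z}+(z+\mu)S_n^2,\qquad n\ge0.$$ Let $\phi_n=\phi_n(\mu)=S_n(0;\mu)$ and $\phi_n'=\frac{\partial S_n}{\partial z}(0;\mu)$. Then for all $n\ge 3$, $$\phi_{n+1}=\frac{\phi_n\phi_{n-1}}{\phi_{n-2}}\left(2\mu^2-2n^2+2n-1-\frac{\phi_n\phi_{n-3}}{\phi_{n-1}\phi_{n-2}}\right),$$ $$\phi_{n+1}'=-\frac{\phi_n\phi_{n+2}}{\phi_{n+1}}+\mu\,\phi_{n+1}.$$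
   Context: The $S_n(z;\mu)$ are the Umemura polynomials associated with the third Painlevé equation, regarded as functions of $z$ and the parameter $\mu$; the identities are identities of functions of $\mu$. Here $\phi_n'$ denotes the $z$-derivative evaluated at $z=0$, not a derivative with respect to $\mu$. *)

(* Defs.v *)
From HB Require Import structures.
From mathcomp Require Import all_boot all_order all_algebra.
From mathcomp Require Import complex.
From mathcomp Require Import reals.
Set Implicit Arguments. Unset Strict Implicit. Unset Printing Implicit Defensive.
Import Order.TTheory GRing.Theory Num.Theory.
Local Open Scope ring_scope.

(* The parameter field: rational functions in the formal parameter mu over
   the complex numbers C = R[i] (R a real-number type). *)
Definition Kmu (R : realType) := {fraction {poly R[i]}}.

Definition mu (R : realType) : Kmu R := tofrac ('X : {poly R[i]}).

(* Umemura recurrence, with the index shifted by one: S k stands for S_{k-1},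
   so S 0 = S_{-1}, S 1 = S_0, and the recurrence at n >= 0 reads
   S_{n+1} S_{n-1} = -z [S_n S_n'' - (S_n')^2] - S_n S_n' + (z + mu) S_n^2. *)
Definition umemura_seq (R : realType) (S : nat -> {poly Kmu R}) : Prop :=
  [/\ S 0%N = 1, S 1%N = 1 &
   forall n : nat,
     S n.+2 * S n =
       - 'X * (S n.+1 * (S n.+1)^`(2) - ((S n.+1)^`()) ^+ 2)
       - S n.+1 * (S n.+1)^`()
       + ('X + (mu R)%:P) * (S n.+1) ^+ 2].

Definition phi (R : realType) (S : nat -> {poly Kmu R}) (n : nat) : Kmu R :=
  (S n.+1).[0].
Definition dphi (R : realType) (S : nat -> {poly Kmu R}) (n : nat) : Kmu R :=
  ((S n.+1)^`()).[0].

(* Main.v *)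
Require Import Defs.
From HB Require Import structures.
From mathcomp Require Import all_boot all_order all_algebra.
From mathcomp Require Import complex.
From mathcomp Require Import reals.
From mathcomp Require Import ring zify.
Import Order.TTheory GRing.Theory Num.Theory.
Local Open Scope ring_scope.

Definition Fp (R : realType) (g : {poly Kmu R}) : {poly Kmu R} :=
  - 'X * (g * g^`()^`() - g^`() ^+ 2) - g * g^`() + ('X + (mu R)%:P) * g ^+ 2.

Arguments Fp {R}.

Lemma dFp (R : realType) (g : {poly Kmu R}) : (Fp g)^`() =
  - (2%:R * g * g^`()^`()) - 'X * (g * g^`()^`()^`() - g^`() * g^`()^`())
  + g * g + 2%:R * ('X + (mu R)%:P) * g * g^`().
Proof. rewrite /Fp !expr2 !derivE; ring. Qed.

Lemma stepW (R : realType) (f g h k : {poly Kmu R}) (m : nat) :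
  g != 0 -> h * f = Fp g -> k * g = Fp h ->
  h^`() * f - h * f^`() = g ^+ 2 *+ m ->
  h^`()^`() * g - (h^`() * g^`()) *+ 2 + h * g^`()^`() = 0 ->
  k^`() * g - k * g^`() = h ^+ 2 *+ m.+2.
Proof.
move=> gn0 T1 T2 W C.
have T1d := congr1 deriv T1; have T2d := congr1 deriv T2; have Cd := congr1 deriv C.
move/eqP: T1; rewrite -subr_eq0 => /eqP T1.
move/eqP: T2; rewrite -subr_eq0 => /eqP T2.
move/eqP: T1d; rewrite -subr_eq0 => /eqP T1d.
move/eqP: T2d; rewrite -subr_eq0 => /eqP T2d.
move/eqP: W; rewrite -subr_eq0 => /eqP W.
rewrite deriv0 in Cd.
apply: (mulfI (expf_neq0 2 gn0)).
apply/eqP; rewrite -subr_eq0; apply/eqP.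
have -> : g ^+ 2 * (k^`() * g - k * g^`()) - g ^+ 2 * (h ^+ 2 *+ m.+2) =
  - ((2%:R * g * h - 'X * g * h^`() - 'X * g^`() * h) *
      (h^`()^`() * g - (h^`() * g^`()) *+ 2 + h * g^`()^`()))
  - ('X * g * h) * (h^`()^`() * g - (h^`() * g^`()) *+ 2 + h * g^`()^`())^`()
  + h ^+ 2 * (h^`() * f - h * f^`() - g ^+ 2 *+ m)
  - 2%:R * h * h^`() * (h * f - Fp g)
  + h ^+ 2 * ((h * f)^`() - (Fp g)^`())
  + g ^+ 2 * ((k * g)^`() - (Fp h)^`())
  - 2%:R * g * g^`() * (k * g - Fp h).
  rewrite !dFp /Fp !derivE; ring.
by rewrite Cd T1 T2 T1d T2d W C; ring.
Qed.

Lemma stepC (R : realType) (g h k : {poly Kmu R}) (m : nat) :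
  g != 0 ->
  k^`() * g - k * g^`() = h ^+ 2 *+ m ->
  h^`()^`() * g - (h^`() * g^`()) *+ 2 + h * g^`()^`() = 0 ->
  k^`()^`() * h - (k^`() * h^`()) *+ 2 + k * h^`()^`() = 0.
Proof.
move=> gn0 W C.
move/eqP: W; rewrite -subr_eq0 => /eqP W.
have Wd := congr1 deriv W; rewrite deriv0 in Wd.
apply: (mulfI gn0); rewrite mulr0.
have -> : g * (k^`()^`() * h - (k^`() * h^`()) *+ 2 + k * h^`()^`()) =
  h * (k^`() * g - k * g^`() - h ^+ 2 *+ m)^`()
  - 2%:R * h^`() * (k^`() * g - k * g^`() - h ^+ 2 *+ m)
  + k * (h^`()^`() * g - (h^`() * g^`()) *+ 2 + h * g^`()^`()).
  rewrite !derivE; ring.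
by rewrite Wd W C; ring.
Qed.

Arguments stepW {R f g h k m}.
Arguments stepC {R g h k m}.

Lemma natK_neq0 (R : realType) (m : nat) : (0 < m)%N -> (m%:R : Kmu R) != 0.
Proof.
move=> m0; rewrite -(rmorph_nat (@tofrac _)) tofrac_eq0 -polyC_natr polyC_eq0.
by rewrite pnatr_eq0 -lt0n.
Qed.

Lemma musq_neq0 (R : realType) (m : nat) : (mu R ^+ 2 - m%:R ^+ 2 : Kmu R) != 0.
Proof.
have -> : (mu R ^+ 2 - m%:R ^+ 2 : Kmu R) =
  tofrac ('X ^+ 2 - (m%:R) ^+ 2 : {poly R[i]}).
  by rewrite rmorphB !rmorphXn rmorph_nat.
rewrite tofrac_eq0.
apply/eqP => H; have := congr1 (fun p : {poly R[i]} => p`_2) H.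
rewrite coefB coef0 -natrX coefMn coef1 coefXn /= mul0rn subr0 => /eqP.
by rewrite oner_eq0.
Qed.

Lemma recF (R : realType) (S : nat -> {poly Kmu R}) : umemura_seq S ->
  forall n, S n.+2 * S n = Fp (S n.+1).
Proof. by case=> _ _ H n; rewrite H. Qed.

Lemma d1 (R : realType) : (1 : {poly Kmu R})^`() = 0.
Proof. by rewrite -polyC1 derivC. Qed.

Lemma d2 (R : realType) : ('X + (mu R)%:P : {poly Kmu R})^`() = 1.
Proof. by rewrite derivD derivX derivC addr0. Qed.

Arguments recF {R S}.

Lemma polyinv (R : realType) (S : nat -> {poly Kmu R}) : umemura_seq S ->
  forall n, [/\ S n.+1 != 0,
    (S n.+2)^`() * S n - S n.+2 * (S n)^`() = S n.+1 ^+ 2 *+ (2 * n + 1) &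
    (S n.+2)^`()^`() * S n.+1 - ((S n.+2)^`() * (S n.+1)^`()) *+ 2
      + S n.+2 * (S n.+1)^`()^`() = 0].
Proof.
move=> HS; have rec := recF HS; case: HS => S0 S1 _.
elim=> [|n [gn0 W C]].
  have S2 : S 2 = 'X + (mu R)%:P.
    rewrite -[S 2]mulr1 -S0 rec /Fp S1 (d1 R) deriv0; ring.
  rewrite S0 S1 S2 (d2 R) (d1 R) deriv0; split.
  - exact: oner_neq0.
  - ring.
  - ring.
have hn0 : S n.+2 != 0.
  apply/eqP => h0; move: W; rewrite h0 deriv0 mul0r mul0r subrr => /esym/eqP.
  rewrite -mulr_natr mulf_eq0 expf_eq0 (negbTE gn0) andbF /=.
  have nz : ((2 * n + 1)%:R : Kmu R) != 0 by apply: natK_neq0; rewrite addn1.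
  by rewrite -polyC_natr polyC_eq0 (negbTE nz).
split; first exact: hn0.
  have -> : (2 * n.+1 + 1 = (2 * n + 1).+2)%N by lia.
  exact: (stepW gn0 (rec n) (rec n.+1) W C).
exact: (stepC gn0 (stepW gn0 (rec n) (rec n.+1) W C) C).
Qed.

Definition av (R : realType) (S : nat -> {poly Kmu R}) j := (S j).[0].
Definition bv (R : realType) (S : nat -> {poly Kmu R}) j := ((S j)^`()).[0].
Arguments av {R}. Arguments bv {R}.
Arguments polyinv {R S}.

Lemma T0 (R : realType) (S : nat -> {poly Kmu R}) : umemura_seq S -> forall n,
  av S n.+2 * av S n = av S n.+1 * (mu R * av S n.+1 - bv S n.+1).
Proof.
move=> HS n; have := congr1 (horner^~ 0) (recF HS n).
rewrite /= /Fp /av /bv.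
rewrite !(hornerD, hornerN, hornerM, horner_exp, hornerX, hornerC).
move=> ->; ring.
Qed.

Lemma W0 (R : realType) (S : nat -> {poly Kmu R}) : umemura_seq S -> forall n,
  bv S n.+2 * av S n - av S n.+2 * bv S n = (2 * n + 1)%:R * av S n.+1 ^+ 2.
Proof.
move=> HS n; have [_ W _] := polyinv HS n.
have := congr1 (horner^~ 0) W.
rewrite /= /av /bv.
rewrite !(hornerD, hornerN, hornerM, horner_exp, hornerMn).
move=> ->; rewrite mulr_natl; ring.
Qed.

Arguments T0 {R S}. Arguments W0 {R S}.

Definition uv (R : realType) (S : nat -> {poly Kmu R}) j := mu R * av S j - bv S j.
Arguments uv {R}.

Lemma sinv (R : realType) (S : nat -> {poly Kmu R}) : umemura_seq S -> forall n,
  [/\ av S n != 0, av S n.+1 != 0 &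
      uv S n.+1 * uv S n = (mu R ^+ 2 - n%:R ^+ 2) * av S n.+1 * av S n].
Proof.
move=> HS; have T := T0 HS; have W := W0 HS; case: HS => S0 S1 _.
have a0 : av S 0 = 1 by rewrite /av S0 -polyC1 hornerC.
have a1 : av S 1 = 1 by rewrite /av S1 -polyC1 hornerC.
have b0 : bv S 0 = 0 by rewrite /bv S0 (d1 R) horner0.
have b1 : bv S 1 = 0 by rewrite /bv S1 (d1 R) horner0.
elim=> [|n [an0 an1 V]].
  rewrite /uv a0 a1 b0 b1; split.
  - exact: oner_neq0.
  - exact: oner_neq0.
  - ring.
have rnz : (mu R ^+ 2 - n%:R ^+ 2) * av S n.+1 * av S n != 0.
  exact: (mulf_neq0 (mulf_neq0 (musq_neq0 R n) an1) an0).
have un1 : uv S n.+1 != 0.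
  apply/eqP => Hu; move: rnz; by rewrite -V Hu mul0r eqxx.
have an2 : av S n.+2 != 0.
  apply/eqP => Ha; have := T n; rewrite Ha mul0r => /esym/eqP.
  by rewrite -/(uv S n.+1) mulf_eq0 (negbTE an1) (negbTE un1).
split; [exact: an1 | exact: an2 |].
apply: (mulfI an0).
apply/eqP; rewrite -subr_eq0; apply/eqP.
have Td := T n; move/eqP: Td; rewrite -subr_eq0 => /eqP Td.
have Wd := W n; move/eqP: Wd; rewrite -subr_eq0 => /eqP Wd.
move/eqP: V; rewrite -subr_eq0 => /eqP Vd.
have -> : av S n * (uv S n.+2 * uv S n.+1) -
   av S n * ((mu R ^+ 2 - n.+1%:R ^+ 2) * av S n.+2 * av S n.+1) =
  - uv S n.+1 * (bv S n.+2 * av S n - av S n.+2 * bv S n - (2 * n + 1)%:R * av S n.+1 ^+ 2)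
  + av S n.+2 * (uv S n.+1 * uv S n - (mu R ^+ 2 - n%:R ^+ 2) * av S n.+1 * av S n)
  + (2 * n + 1)%:R * av S n.+1 *
      (av S n.+2 * av S n - av S n.+1 * (mu R * av S n.+1 - bv S n.+1)).
  rewrite /uv; ring.
by rewrite Td Wd Vd; ring.
Qed.

Arguments sinv {R S}.

Lemma Rrel (R : realType) (S : nat -> {poly Kmu R}) : umemura_seq S -> forall p,
  av S p.+3 * av S p = (mu R ^+ 2 - p.+1%:R ^+ 2) * av S p.+2 * av S p.+1.
Proof.
move=> HS p; have [a1 a2 V] := sinv HS p.+1.
have T1 := T0 HS p.+1; have Tp := T0 HS p.
move/eqP: T1; rewrite -subr_eq0 => /eqP T1.
move/eqP: Tp; rewrite -subr_eq0 => /eqP Tp.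
move/eqP: V; rewrite -subr_eq0 => /eqP Vd.
apply: (mulfI (mulf_neq0 a1 a2)).
apply/eqP; rewrite -subr_eq0; apply/eqP.
have -> : av S p.+1 * av S p.+2 * (av S p.+3 * av S p) -
  av S p.+1 * av S p.+2 * ((mu R ^+ 2 - p.+1%:R ^+ 2) * av S p.+2 * av S p.+1) =
  (av S p.+3 * av S p.+1 - av S p.+2 * (mu R * av S p.+2 - bv S p.+2)) * (av S p.+2 * av S p)
  + av S p.+2 * uv S p.+2 *
      (av S p.+2 * av S p - av S p.+1 * (mu R * av S p.+1 - bv S p.+1))
  + av S p.+2 * av S p.+1 *
      (uv S p.+2 * uv S p.+1 - (mu R ^+ 2 - p.+1%:R ^+ 2) * av S p.+2 * av S p.+1).
  rewrite /uv; ring.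
by rewrite T1 Tp Vd; ring.
Qed.
Arguments Rrel {R S}.

Theorem theorem4p1 (R : realType) (S : nat -> {poly Kmu R}) :
  umemura_seq S ->
  forall n : nat, (3 <= n)%N ->
    phi S n.+1 =
      phi S n * phi S (n - 1)%N / phi S (n - 2)%N *
        (2 * mu R ^+ 2 - 2 * (n%:R) ^+ 2 + 2 * n%:R - 1
         - phi S n * phi S (n - 3)%N / (phi S (n - 1)%N * phi S (n - 2)%N))
    /\ dphi S n.+1 = - (phi S n * phi S n.+2 / phi S n.+1) + mu R * phi S n.+1.
Proof.
move=> HS n n3.
have phiE k : phi S k = av S k.+1 by [].
have dphiE k : dphi S k = bv S k.+1 by [].
split.
  case: n n3 => [|[|[|m]]] n3; [by [] | by [] | by [] |].
  rewrite !subSS !subn0 !phiE.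
  have [a2 a3 _] := sinv HS m.+2.
  have R1 := Rrel HS m.+2; have R2 := Rrel HS m.+1.
  rewrite R2.
  have e5 : av S m.+4.+1 =
      (mu R ^+ 2 - m.+3%:R ^+ 2) * av S m.+4 * av S m.+3 / av S m.+2.
    by apply: (mulIf a2); rewrite R1 (divfK a2).
  have e2 : (mu R ^+ 2 - m.+2%:R ^+ 2) * av S m.+3 * av S m.+2 /
      (av S m.+3 * av S m.+2) = mu R ^+ 2 - m.+2%:R ^+ 2.
    apply: (mulIf (mulf_neq0 a3 a2)); rewrite (divfK (mulf_neq0 a3 a2)); ring.
  rewrite e5 e2; ring.
rewrite !phiE dphiE.
have [_ a2 _] := sinv HS n.+1.
rewrite (mulrC (av S n.+1)) (T0 HS n.+1).
rewrite [X in - X]mulrC mulKf; last exact: a2.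
ring.
Qed.
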